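(* Let $\mathbf{Sym}$ be the free associative (noncommutative) algebra over $\mathbb{C}$ generated by $S_1,S_2,\dots$, graded by $\deg S_n=n$, let $\widehat{\mathbf{Sym}}$ be its completion (formal sums $\sum_{n\ge 0}f_n$ with $f_n$ homogeneous of degree $n$), and put $S_0=1$ and $\sigma_1=\sum_{n\ge 0}S_n$. Let $K_n\in\mathbf{Sym}$ ($n\ge 0$) be the unique homogeneous elements of degree $n$ with $K_0=1$ such that $$\sigma_1=\sum_{n\ge 0}K_n\,\sigma_1^{\,n},$$ and let $g=\sum_{n\ge0}g_n$ ($g_n$ homogeneous of degree $n$, $g_0=1$) be the unique element of $\widehat{\mathbf{Sym}}$ such that $g=\sum_{n\ge 0}S_n\,g^{\,n}$. Then $$1+\sum_{n\ge 1}K_n \;=\; \big(g^{-1}\big)(-A),$$ where $g^{-1}$ is the multiplicative inverse of $g$ in $\widehat{\mathbf{Sym}}$ and $f\mapsto f(-A)$ is the map defined in the context.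
   Context: The noncommutative elementary functions $\Lambda_n$ are defined by $\Lambda_0=1$ and $\big(\sum_{n\ge0}S_nt^n\big)\big(\sum_{n\ge0}(-1)^n\Lambda_nt^n\big)=1$. For $f\in\widehat{\mathbf{Sym}}$, $f(-A)$ denotes the image of $f$ under the (continuous) algebra automorphism of $\widehat{\mathbf{Sym}}$ sending $S_n\mapsto(-1)^n\Lambda_n$ for all $n\ge1$. *)

(* Defs.v *)
From mathcomp Require Import all_boot all_algebra.
Set Implicit Arguments. Unset Strict Implicit. Unset Printing Implicit Defensive.
Import GRing.Theory.
Local Open Scope ring_scope.

(* A word  w = [:: i1; ...; ik] : seq nat  encodes the monomial
   S^I = S_{i1+1} S_{i2+1} ... S_{ik+1}  (I a composition), so the
   words are in bijection with the compositions, which form a basis of Sym.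
   Since each homogeneous component of Sym is finite dimensional with basis
   the S^I, |I| = n, an element of the completion  \hat{Sym}  (formal sums
   of homogeneous elements) is exactly an arbitrary coefficient function
   seq nat -> F.  *)

Definition series (F : fieldType) := seq nat -> F.

Definition deg (w : seq nat) : nat := (\sum_(i <- w) i.+1)%N.

Section NCSF.
Variable F : fieldType.

Definition szero : series F := fun _ => 0.
Definition sone : series F := fun w => (w == [::])%:R.
Definition sadd (f g : series F) : series F := fun w => f w + g w.
Definition sscale (c : F) (f : series F) : series F := fun w => c * f w.
Definition smul (f g : series F) : series F :=
  fun w => \sum_(i < (size w).+1) f (take i w) * g (drop i w).
Fixpoint spow (f : series F) (n : nat) : series F :=
  if n is m.+1 then smul f (spow f m) else sone.

Definition Sgen (n : nat) : series F :=
  if n is m.+1 then (fun w => (w == [:: m])%:R) else sone.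

Definition homogeneous (n : nat) (f : series F) : Prop :=
  forall w, deg w <> n -> f w = 0.

(* It is only used for
   families where G n has order >= n (all coefficients in degree < n vanish),
   in which case the coefficient of a word w is the finite sum over n <= deg w
   (the family is summable in the degree topology). *)
Definition ssum (G : nat -> series F) : series F :=
  fun w => \sum_(n < (deg w).+1) G n w.

Definition sigma1 : series F := ssum Sgen.

(* Lam is the family of noncommutative elementary functions: Lam_0 = 1 and
   (\sum_n S_n t^n)(\sum_n (-1)^n Lam_n t^n) = 1, i.e. the coefficient of t^n
   vanishes for every n >= 1. *)
Definition is_Lambda (Lam : nat -> series F) : Prop :=
  Lam 0%N = sone /\
  forall n, (0 < n)%N -> forall w,
    \sum_(i < n.+1) smul (Sgen i) (sscale ((-1) ^+ (n - i)) (Lam (n - i)%N)) w = 0.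

(* phi is the map f |-> f(-A): the continuous F-algebra automorphism of
   \hat{Sym} sending S_n to (-1)^n Lam_n for all n >= 1.  Continuity is with
   respect to the degree filtration: coefficients of phi f in degrees <= d
   depend only on the coefficients of f in degrees <= d. *)
Definition is_minusA (Lam : nat -> series F) (phi : series F -> series F) : Prop :=
     (forall f g, phi (sadd f g) = sadd (phi f) (phi g)) /\
     (forall c f, phi (sscale c f) = sscale c (phi f)) /\
     (forall f g, phi (smul f g) = smul (phi f) (phi g)) /\
      phi sone = sone /\
      bijective phi /\
      (forall (f g : series F) (d : nat),
          (forall u, (deg u <= d)%N -> f u = g u) ->
          forall w, (deg w <= d)%N -> phi f w = phi g w) /\
     (forall n, (0 < n)%N -> phi (Sgen n) = sscale ((-1) ^+ n) (Lam n)).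

End NCSF.

(* Main.v *)
From HB Require Import structures.
Require Import Defs.
From mathcomp Require Import all_boot all_algebra.
From mathcomp Require Import boolp zify.
Import GRing.Theory.
Local Open Scope ring_scope.
Set Implicit Arguments. Unset Strict Implicit. Unset Printing Implicit Defensive.

Section Ring.
Variable F : fieldType.
Definition ser := series F.
HB.instance Definition _ := gen_eqMixin ser.
HB.instance Definition _ := gen_choiceMixin ser.

Definition sopp (f : ser) : ser := fun w => - f w.

Lemma sfunext (f g : ser) : (forall w, f w = g w) -> f = g.
Proof. move=> h; exact: (boolp.funext h). Qed.

Lemma saddA : associative (@sadd F).
Proof. by move=> f g h; apply: sfunext => w; rewrite /sadd addrA. Qed.
Lemma saddC : commutative (@sadd F).
Proof. by move=> f g; apply: sfunext => w; rewrite /sadd addrC. Qed.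
Lemma sadd0 : left_id (szero F) (@sadd F).
Proof. by move=> f; apply: sfunext => w; rewrite /sadd /szero add0r. Qed.
Lemma saddN : left_inverse (szero F) sopp (@sadd F).
Proof. by move=> f; apply: sfunext => w; rewrite /sadd /sopp /szero addNr. Qed.

HB.instance Definition _ := GRing.isZmodule.Build ser saddA saddC sadd0 saddN.

Lemma smul_nil (f g : ser) : smul f g [::] = f [::] * g [::].
Proof. by rewrite /smul big_ord1. Qed.

Lemma smul_cons (f g : ser) a w :
  smul f g (a :: w) = f [::] * g (a :: w) + smul (fun u => f (a :: u)) g w.
Proof. by rewrite /smul big_ord_recl /=. Qed.

Lemma smulDl_pt (f1 f2 g : ser) w :
  smul (fun u => f1 u + f2 u) g w = smul f1 g w + smul f2 g w.
Proof. by rewrite /smul -big_split /=; apply: eq_bigr => i _; rewrite mulrDl. Qed.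
Lemma smulDr_pt (f g1 g2 : ser) w :
  smul f (fun u => g1 u + g2 u) w = smul f g1 w + smul f g2 w.
Proof. by rewrite /smul -big_split /=; apply: eq_bigr => i _; rewrite mulrDr. Qed.
Lemma smulZl_pt c (f g : ser) w :
  smul (fun u => c * f u) g w = c * smul f g w.
Proof. by rewrite /smul mulr_sumr; apply: eq_bigr => i _; rewrite mulrA. Qed.

Lemma smulA : associative (@smul F).
Proof.
move=> f g h; apply: sfunext => w; elim: w f g h => [|a w IH] f g h.
  by rewrite !smul_nil mulrA.
rewrite !smul_cons !smul_nil.
have -> : (fun u => smul f g (a :: u)) =
          (fun u => f [::] * g (a :: u) + smul (fun v => f (a :: v)) g u).
  by apply: boolp.funext => u; rewrite smul_cons.
rewrite smulDl_pt smulZl_pt IH; rewrite mulrDr !mulrA addrA.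
by congr (_ + _); rewrite -!mulrA.
Qed.

Lemma smul1 : left_id (sone F) (@smul F).
Proof.
move=> f; apply: sfunext => w; rewrite /smul big_ord_recl /= /sone take0 drop0 /= mul1r.
case: w => [|a w]; first by rewrite big_ord0 addr0.
by rewrite big1 ?addr0 // => i _; rewrite mul0r.
Qed.

Lemma smulr1 : right_id (sone F) (@smul F).
Proof.
move=> f; apply: sfunext => w; rewrite /smul big_ord_recr /= take_size drop_size.
rewrite /sone /= mulr1 big1 ?add0r // => i _.
have : (drop i w != [::]).
  by rewrite -size_eq0 size_drop subn_eq0 -ltnNge ltn_ord.
by case: (drop _ _) => //= _ _; rewrite mulr0.
Qed.

Lemma smulDl : left_distributive (@smul F : ser -> ser -> ser) (@GRing.add ser).
Proof. by move=> f g h; apply: sfunext => w; rewrite /= /sadd smulDl_pt. Qed.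
Lemma smulDr : right_distributive (@smul F : ser -> ser -> ser) (@GRing.add ser).
Proof. by move=> f g h; apply: sfunext => w; rewrite /= /sadd smulDr_pt. Qed.

Lemma sone_neq0 : (sone F : ser) != 0.
Proof.
apply/eqP => H; have := congr1 (fun f : ser => f [::]) H.
by rewrite /sone /= => /eqP; rewrite oner_eq0.
Qed.

HB.instance Definition _ := GRing.Zmodule_isNzRing.Build ser smulA smul1 smulr1 smulDl smulDr sone_neq0.

End Ring.
Unset Implicit Arguments.

Section Theory.
Context {F : fieldType}.
Local Notation R := (ser F).

Lemma evalD (f g : R) w : (f + g) w = f w + g w. Proof. by []. Qed.
Lemma evalB (f g : R) w : (f - g) w = f w - g w. Proof. by []. Qed.
Lemma eval0 w : (0 : R) w = 0. Proof. by []. Qed.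
Lemma evalN (f : R) w : (- f) w = - f w. Proof. by []. Qed.
Lemma evalM (f g : R) w : (f * g) w = \sum_(i < (size w).+1) f (take i w) * g (drop i w).
Proof. by []. Qed.
Lemma eval1 w : (1 : R) w = (w == [::])%:R. Proof. by []. Qed.

Lemma eval_sum I (r : seq I) (P : pred I) (G : I -> R) w :
  (\sum_(i <- r | P i) G i) w = \sum_(i <- r | P i) G i w.
Proof. by apply: (big_morph (fun f : R => f w)). Qed.

Lemma deg_cat u v : deg (u ++ v) = (deg u + deg v)%N.
Proof. by rewrite /deg big_cat. Qed.
Lemma deg_take_drop i w : (deg (take i w) + deg (drop i w))%N = deg w.
Proof. by rewrite -deg_cat cat_take_drop. Qed.
Lemma deg0 w : (deg w < 1)%N -> w = [::].
Proof. by case: w => // a w; rewrite /deg big_cons. Qed.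

Definition agr d (f g : R) := forall w, (deg w < d)%N -> f w = g w.
Definition ordr d (f : R) := agr d f 0.

Lemma agr_ordr d (f g : R) : agr d f g <-> ordr d (f - g).
Proof.
split=> h w hw; first by rewrite eval0 evalB h ?subrr.
by apply/eqP; rewrite -subr_eq0; apply/eqP; exact: h.
Qed.

Lemma ser_ext (f g : R) : (forall d, agr d f g) -> f = g.
Proof. by move=> h; apply: sfunext => w; apply: (h (deg w).+1). Qed.

Lemma agr_le d e (f g : R) : (e <= d)%N -> agr d f g -> agr e f g.
Proof. by move=> le h w hw; apply: h; apply: leq_trans le. Qed.

Lemma agr_mul d (f f' g g' : R) : agr d f f' -> agr d g g' -> agr d (f * g) (f' * g').
Proof.
move=> hf hg w hw; rewrite !evalM; apply: eq_bigr => i _.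
have := deg_take_drop i w => e.
by rewrite hf ?hg //; lia.
Qed.

Lemma ordr_mul a b (f g : R) : ordr a f -> ordr b g -> ordr (a + b)%N (f * g).
Proof.
move=> hf hg w hw; rewrite evalM eval0 big1 // => i _.
have := deg_take_drop i w => e.
case: (ltnP (deg (take i w)) a) => ha; first by rewrite hf // mul0r.
rewrite hg ?mulr0 //; lia.
Qed.

Lemma ordr0 (f : R) : ordr 0 f. Proof. by []. Qed.
Lemma ordr_le a b (f : R) : (b <= a)%N -> ordr a f -> ordr b f.
Proof. exact: agr_le. Qed.

Lemma agr_mull n d (a X Y : R) : ordr n a -> agr d X Y -> agr (n + d)%N (a * X) (a * Y).
Proof.
move=> ha /agr_ordr h; apply/agr_ordr; rewrite -mulrBr; exact: ordr_mul.
Qed.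
Lemma agr_mulr n d (a X Y : R) : ordr n a -> agr d X Y -> agr (d + n)%N (X * a) (Y * a).
Proof.
move=> ha /agr_ordr h; apply/agr_ordr; rewrite -mulrBl; exact: ordr_mul.
Qed.

Lemma ordrD n (f g : R) : ordr n f -> ordr n g -> ordr n (f + g).
Proof. by move=> hf hg w hw; rewrite evalD hf ?hg ?addr0. Qed.

Lemma ordr_sum n I (r : seq I) (G : I -> R) : (forall i, ordr n (G i)) -> ordr n (\sum_(i <- r) G i).
Proof. by move=> h w hw; rewrite eval_sum eval0 big1 // => i _; apply: h. Qed.

Lemma agr_refl d (f : R) : agr d f f. Proof. by []. Qed.
Lemma agr_sym d (f g : R) : agr d f g -> agr d g f. Proof. by move=> h w hw; rewrite h. Qed.
Lemma agr_trans d (f g h : R) : agr d f g -> agr d g h -> agr d f h.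
Proof. by move=> h1 h2 w hw; rewrite h1 ?h2. Qed.
Lemma agrD d (f f' g g' : R) : agr d f f' -> agr d g g' -> agr d (f + g) (f' + g').
Proof. by move=> h1 h2 w hw; rewrite !evalD h1 ?h2. Qed.

Lemma agr_exp d (f g : R) n : agr d f g -> agr d (f ^+ n) (g ^+ n).
Proof. by move=> h; elim: n => // n IH; rewrite !exprS; apply: agr_mul. Qed.

Definition ordfam (G : nat -> R) := forall n, ordr n (G n).

Lemma ssumE (G : nat -> R) w : ssum G w = \sum_(n < (deg w).+1) G n w.
Proof. by []. Qed.

Lemma sum_trunc (G : nat -> F) m N : (m <= N)%N ->
  (forall n, (m <= n)%N -> (n < N)%N -> G n = 0) ->
  \sum_(n < N) G n = \sum_(n < m) G n.
Proof.
move=> le h; rewrite -!(big_mkord xpredT) (big_cat_nat (n := m)) //=.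
rewrite [X in _ + X]big_nat_cond [X in _ + X]big1 ?addr0 // => i /andP[/andP[h1 h2] _].
exact: h.
Qed.

Lemma ssum_trunc (G : nat -> R) N : ordfam G -> agr N (ssum G) (\sum_(n < N) G n).
Proof.
move=> hG w hw; rewrite ssumE eval_sum [RHS](@sum_trunc (fun n => G n w) (deg w).+1 N) //.
by move=> n h1 h2; apply: hG.
Qed.

Lemma ordfam_ssum (G : nat -> R) n : (forall m, ordr n (G m)) -> ordr n (ssum G).
Proof. by move=> h w hw; rewrite ssumE eval0 big1 // => i _; apply: h. Qed.

Lemma ssum_mull (f : R) (G : nat -> R) : ordfam G ->
  f * ssum G = ssum (fun n => f * G n).
Proof.
move=> hG; apply: sfunext => w.
transitivity ((f * \sum_(n < (deg w).+1) G n) w).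
  exact: (agr_mul _ _ _ _ _ (agr_refl _ f) (ssum_trunc G (deg w).+1 hG) w (ltnSn _)).
by rewrite mulr_sumr eval_sum.
Qed.

Lemma ssum_mulr (f : R) (G : nat -> R) : ordfam G ->
  (ssum G : R) * f = ssum (fun n => G n * f).
Proof.
move=> hG; apply: sfunext => w.
transitivity (((\sum_(n < (deg w).+1) G n) * f) w).
  exact: (agr_mul _ _ _ _ _ (ssum_trunc G (deg w).+1 hG) (agr_refl _ f) w (ltnSn _)).
by rewrite mulr_suml eval_sum.
Qed.

Lemma ordfam_mull (f : R) (G : nat -> R) : ordfam G -> ordfam (fun n => f * G n).
Proof. by move=> h n; have := ordr_mul _ _ _ _ (ordr0 f) (h n); rewrite add0n. Qed.
Lemma ordfam_mulr (f : R) (G : nat -> R) : ordfam G -> ordfam (fun n => G n * f).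
Proof. by move=> h n; have := ordr_mul _ _ _ _ (h n) (ordr0 f); rewrite addn0. Qed.

Lemma ssumD (G1 G2 : nat -> R) : (ssum G1 : R) + (ssum G2 : R) = ssum (fun n => G1 n + G2 n).
Proof. by apply: sfunext => w; rewrite evalD !ssumE -big_split. Qed.
Lemma ssumB (G1 G2 : nat -> R) : (ssum G1 : R) - (ssum G2 : R) = ssum (fun n => G1 n - G2 n).
Proof. by apply: sfunext => w; rewrite evalB !ssumE -sumrB. Qed.

Lemma agr_ssum d (G1 G2 : nat -> R) : (forall n, agr d (G1 n) (G2 n)) -> agr d (ssum G1) (ssum G2).
Proof. by move=> h w hw; rewrite !ssumE; apply: eq_bigr => i _; apply: h. Qed.

Lemma ssum_single (Y : R) n : ordr n Y -> ssum (fun a => if a == n then Y else 0) = Y.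
Proof.
move=> hY; apply: sfunext => w; rewrite ssumE.
rewrite (eq_bigr (fun a : 'I_ _ => if (a : nat) == n then Y w else 0)); last first.
  by move=> i _; case: eqP.
rewrite -big_mkcond /=. rewrite (big_ord1_eq _ (fun _ => Y w)); case: ifP => // h.
by rewrite hY //; move/negbT: h; rewrite ltnS -ltnNge.
Qed.

Lemma ssum_recl (G : nat -> R) : ordfam G -> ssum G = G 0%N + ssum (fun n => G n.+1).
Proof.
move=> hG; apply: sfunext => w; rewrite evalD !ssumE big_ord_recl /=; congr (_ + _).
rewrite big_ord_recr /= [X in _ + X]hG ?addr0 //.
Qed.

Lemma tri_sum (g : nat -> nat -> F) N :
  \sum_(k < N) \sum_(i < k.+1) g i (k - i)%N = \sum_(i < N) \sum_(j < N - i) g i j.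
Proof.
elim: N => [|N IH]; first by rewrite !big_ord0.
rewrite big_ord_recr /= IH [RHS]big_ord_recr /= subSnn big_ord1.
rewrite [X in _ = X + _](eq_bigr (fun i : 'I_N => \sum_(j < N - i) g i j + g i (N - i)%N)); last first.
  by move=> i _; rewrite subSn ?(ltnW (ltn_ord i)) // big_ord_recr.
rewrite big_split /= -addrA; congr (_ + _).
by rewrite big_ord_recr /= subnn.
Qed.

Lemma fubini (X : nat -> nat -> R) : (forall n m, ordr (n + m)%N (X n m)) ->
  ssum (fun n => ssum (X n)) = ssum (fun k => \sum_(i < k.+1) X i (k - i)%N).
Proof.
move=> hX; apply: sfunext => w; rewrite !ssumE.
rewrite [RHS](eq_bigr (fun k : 'I_ _ => \sum_(i < k.+1) X i (k - i)%N w)); last by move=> k _; rewrite eval_sum.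
rewrite (tri_sum (fun i j => X i j w)); apply: eq_bigr => n _.
rewrite ssumE (sum_trunc (fun m => X n m w) ((deg w).+1 - n) (deg w).+1) ?leq_subr // => m h1 h2.
apply: hX; move: (ltn_ord n) h1 => h3 h1; lia.
Qed.

End Theory.

Section Ev.
Context {F : fieldType}.
Local Notation R := (ser F).
Local Notation sig := (sigma1 F : R).

Lemma spowE (f : R) n : spow f n = f ^+ n.
Proof. by elim: n => // n IH; rewrite exprS /= IH. Qed.

Lemma hom_ordr n (f : R) : homogeneous n f -> ordr n f.
Proof. by move=> h w hw; rewrite h //; move=> e; rewrite e ltnn in hw. Qed.

Lemma hom_mul a b (f g : R) : homogeneous a f -> homogeneous b g -> homogeneous (a + b)%N (f * g).
Proof.
move=> hf hg w hw; rewrite evalM big1 // => i _.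
have := deg_take_drop i w => e.
case: (eqVneq (deg (take i w)) a) => ha; last by rewrite hf ?mul0r //; apply/eqP.
rewrite hg ?mulr0 // => hb; apply: hw; lia.
Qed.

Lemma hom0 n : homogeneous n (0 : R). Proof. by []. Qed.
Lemma homD n (f g : R) : homogeneous n f -> homogeneous n g -> homogeneous n (f + g).
Proof. by move=> hf hg w hw; rewrite evalD hf ?hg ?addr0. Qed.
Lemma homN n (f : R) : homogeneous n f -> homogeneous n (- f).
Proof. by move=> hf w hw; rewrite evalN hf ?oppr0. Qed.
Lemma hom_sum n I (r : seq I) (G : I -> R) : (forall i, homogeneous n (G i)) ->
  homogeneous n (\sum_(i <- r) G i).
Proof. by move=> h w hw; rewrite eval_sum big1 // => i _; apply: h. Qed.

Lemma hom1 : homogeneous 0 (1 : R).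
Proof. move=> w hw; rewrite eval1; case: w hw => // hw; exfalso; apply: hw; by rewrite /deg big_nil. Qed.

Lemma homS n : homogeneous n (Sgen F n : R).
Proof.
case: n => [|n]; first exact: hom1.
move=> w hw; rewrite /Sgen; case: eqP => // e; exfalso; apply: hw.
by rewrite e /deg big_seq1.
Qed.

Definition hcomp n (P : R) : R := fun w => if deg w == n then P w else 0.

Lemma comp_ordr n P : ordr n (hcomp n P).
Proof. by move=> w hw; rewrite /hcomp; case: eqP => // e; rewrite e ltnn in hw. Qed.

Lemma comp_hom n (f : R) m : homogeneous n f -> hcomp m f = if m == n then f else 0.
Proof.
move=> h; apply: sfunext => w; rewrite /hcomp.
case: (eqVneq (deg w) m) => [e|ne]; case: (eqVneq m n) => [e2|ne2] //=.
- by rewrite h // e; apply/eqP.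
- by rewrite h // -e2; apply/eqP.
Qed.

Lemma ssum_comp (P : R) : ssum (fun n => hcomp n P) = P.
Proof.
apply: sfunext => w; rewrite ssumE /hcomp.
rewrite (eq_bigr (fun n : 'I_ _ => if (n : nat) == deg w then P w else 0)); last first.
  by move=> i _; rewrite eq_sym.
by rewrite -big_mkcond /= (big_ord1_eq _ (fun _ => P w)) ltnSn.
Qed.

Lemma compB n (P Q : R) : hcomp n (P - Q) = hcomp n P - hcomp n Q.
Proof. by apply: sfunext => w; rewrite evalB /hcomp; case: ifP => _; rewrite ?subr0. Qed.

Lemma sum_pick (t s n : nat) (c : F) :
  \sum_(a < n.+1) (if t == a then (if s == (n - a)%N then c else 0) else 0) =
  if (t + s == n)%N then c else 0.
Proof.
rewrite (eq_bigr (fun a : 'I_ _ => if (a : nat) == t then (if s == (n - t)%N then c else 0) else 0)); last first.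
  by move=> i _; rewrite eq_sym; case: eqP => // ->.
rewrite -big_mkcond /= (big_ord1_eq _ (fun _ => if s == (n - t)%N then c else 0)).
case: (ltnP t n.+1) => h; case: (eqVneq s (n - t)%N) => h2; case: (eqVneq (t + s)%N n) => h3 //; lia.
Qed.

Lemma comp_mul n (P Q : R) :
  hcomp n (P * Q) = \sum_(a < n.+1) hcomp a P * hcomp (n - a)%N Q.
Proof.
apply: sfunext => w; rewrite eval_sum /hcomp.
rewrite (eq_bigr (fun a : 'I_ _ => \sum_(i < (size w).+1)
   (if deg (take i w) == a then (if deg (drop i w) == (n - a)%N then P (take i w) * Q (drop i w) else 0) else 0))); last first.
  move=> a _; rewrite evalM; apply: eq_bigr => i _.
  by case: eqP; case: eqP; rewrite ?mul0r ?mulr0.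
rewrite exchange_big /=.
rewrite (eq_bigr (fun i : 'I_ _ => if deg w == n then P (take i w) * Q (drop i w) else 0)); last first.
  by move=> i _; rewrite sum_pick deg_take_drop.
by case: eqP => _; [rewrite evalM | rewrite big1].
Qed.

Lemma comp_ssum n (G : nat -> R) : hcomp n (ssum G) = \sum_(k < n.+1) hcomp n (G k).
Proof.
apply: sfunext => w; rewrite eval_sum /hcomp; case: eqP => [e|_]; first by rewrite ssumE e.
by rewrite big1.
Qed.

Definition ev (P : R) : R := ssum (fun n => hcomp n P * sig ^+ n).

Lemma ordfam_ev P : ordfam (fun n => hcomp n P * sig ^+ n).
Proof. by move=> n; have := ordr_mul _ _ _ _ (comp_ordr n P) (ordr0 (sig ^+ n)); rewrite addn0. Qed.

Lemma TM (P Q : R) : ev (P * Q) = ssum (fun a => hcomp a P * ev Q * sig ^+ a).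
Proof.
rewrite /ev.
have -> : (fun n => hcomp n (P * Q) * sig ^+ n) =
  (fun n => \sum_(a < n.+1) (fun a b => hcomp a P * (hcomp b Q * sig ^+ b) * sig ^+ a) a (n - a)%N).
  apply: boolp.funext => n; rewrite comp_mul mulr_suml; apply: eq_bigr => a _ /=.
  by rewrite !mulrA -[RHS]mulrA -exprD subnK // -ltnS.
rewrite -(fubini (fun a b => hcomp a P * (hcomp b Q * sig ^+ b) * sig ^+ a)); last first.
  move=> a b; apply: (ordr_le _ _ _ _ (ordr_mul _ _ _ _ (ordr_mul _ _ _ _ (comp_ordr a P) (ordfam_ev Q b)) (ordr0 _))).
  by rewrite addn0.
congr ssum; apply: boolp.funext => a.
rewrite -ssum_mulr; last by apply: ordfam_mull; apply: ordfam_ev.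
by rewrite -ssum_mull //; apply: ordfam_ev.
Qed.

Lemma TM' (P Q : R) : ev Q * sig = sig * ev Q -> ev (P * Q) = ev P * ev Q.
Proof.
move=> hc; rewrite TM [ev P]/ev ssum_mulr; last exact: ordfam_ev.
congr ssum; apply: boolp.funext => a.
have c : GRing.comm (sig ^+ a) (ev Q).
  by apply/commr_sym/commrX; rewrite /GRing.comm hc.
by rewrite -!mulrA c.
Qed.

Lemma ev_hom n (a Q : R) : homogeneous n a -> ev (a * Q) = a * ev Q * sig ^+ n.
Proof.
move=> h; rewrite TM.
have -> : (fun b => hcomp b a * ev Q * sig ^+ b) = (fun b => if b == n then a * ev Q * sig ^+ n else 0).
  by apply: boolp.funext => b; rewrite (comp_hom _ _ _ h); case: eqP => [->|]; rewrite ?mul0r.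
apply: ssum_single.
have := ordr_mul _ _ _ _ (ordr_mul _ _ _ _ (hom_ordr _ _ h) (ordr0 (ev Q))) (ordr0 (sig ^+ n)).
by rewrite !addn0.
Qed.

Lemma ssum_shift (H : nat -> R) i : ordfam H -> (forall m, (m < i)%N -> H m = 0) ->
  ssum (fun j => H (i + j)%N) = ssum H.
Proof.
elim: i H => [|i IH] H hH h0; first by [].
rewrite [RHS]ssum_recl // h0 // add0r -(IH (fun n => H n.+1)).
- by congr ssum; apply: boolp.funext => j; rewrite addSn.
- by move=> n; apply: (ordr_le _ _ _ _ (hH n.+1)).
- by move=> m hm; apply: h0.
Qed.

Lemma ev_ssum (G : nat -> R) : ordfam G -> ev (ssum G) = ssum (fun k => ev (G k)).
Proof.
move=> hG; rewrite /ev.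
have -> : (fun n => hcomp n (ssum G) * sig ^+ n) =
  (fun n => \sum_(k < n.+1) (fun k j => hcomp (k + j)%N (G k) * sig ^+ (k + j)%N) k (n - k)%N).
  apply: boolp.funext => n; rewrite comp_ssum mulr_suml; apply: eq_bigr => k _ /=.
  by rewrite subnKC // -ltnS ltn_ord.
rewrite -(fubini (fun k j => hcomp (k + j)%N (G k) * sig ^+ (k + j)%N)); last first.
  move=> k j; exact: (ordfam_ev (G k) (k + j)).
congr ssum; apply: boolp.funext => k.
apply: (ssum_shift (fun m => hcomp m (G k) * sig ^+ m)); first exact: ordfam_ev.
move=> m hm.
have -> : hcomp m (G k) = 0.
  apply: sfunext => w; rewrite /hcomp; case: eqP => // e.
  by rewrite (hG k) // e.
by rewrite mul0r.
Qed.

Lemma ev1 : ev 1 = 1.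
Proof.
rewrite /ev.
have -> : (fun n => hcomp n 1 * sig ^+ n) = (fun n => if n == 0%N then 1 else 0).
  by apply: boolp.funext => n; rewrite (comp_hom _ _ _ hom1); case: eqP => [->|]; rewrite ?mul0r ?mulr1.
by apply: ssum_single.
Qed.

Lemma ev_sub (P Q : R) : ev (P - Q) = ev P - ev Q.
Proof.
rewrite /ev ssumB; congr ssum; apply: boolp.funext => n.
by rewrite compB mulrBl.
Qed.

Lemma sig_agr1 : agr 1 sig 1.
Proof.
move=> w hw; rewrite (deg0 _ hw) /sigma1 ssumE /deg big_nil big_ord1.
by [].
Qed.

Lemma ev_inj (P Q : R) : ev P = ev Q -> P = Q.
Proof.
move=> e; have e0 : ev (P - Q) = 0 by rewrite ev_sub e subrr.
apply/eqP; rewrite -subr_eq0; apply/eqP; apply: ser_ext => d.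
set D := P - Q.
suff : ordr d D by move=> h w hw; rewrite h.
elim: d => [|d IH]; first exact: ordr0.
have -> : D = D - ev D by rewrite e0 subr0.
rewrite -{1}(ssum_comp D) /ev ssumB.
apply: ordfam_ssum => n.
case: (ltnP n d) => hn.
  have -> : hcomp n D = 0.
    apply: sfunext => w; rewrite /hcomp; case: eqP => // ew.
    by rewrite IH // ew.
  by rewrite mul0r subr0.
rewrite -{1}[hcomp n D]mulr1 -mulrBr.
case: n hn => [|n] hn.
  by rewrite expr0 subrr mulr0.
have h1 : ordr 1 (1 - sig ^+ n.+1).
  apply/(agr_ordr 1 1 (sig ^+ n.+1)); apply: agr_sym.
  by have := agr_exp _ _ _ n.+1 sig_agr1; rewrite expr1n.
apply: (ordr_le (n.+1 + 1)%N); first by rewrite addn1.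
exact: (ordr_mul _ _ _ _ (comp_ordr _ D) h1).
Qed.

End Ev.

Section Phi.
Context {F : fieldType}.
Local Notation R := (ser F).
Variable phi : series F -> series F.
Hypothesis phiD : forall f g, phi (sadd f g) = sadd (phi f) (phi g).
Hypothesis phiM : forall f g, phi (smul f g) = smul (phi f) (phi g).
Hypothesis phi1 : phi (sone F) = sone F.
Hypothesis phicont : forall (f g : series F) (d : nat),
          (forall u, (deg u <= d)%N -> f u = g u) ->
          forall w, (deg w <= d)%N -> phi f w = phi g w.

Local Notation ph x := (phi x : R).
Lemma phi_add (f g : R) : ph (f + g) = ph f + ph g.
Proof. exact: phiD. Qed.
Lemma phi_mul (f g : R) : ph (f * g) = ph f * ph g.
Proof. exact: phiM. Qed.

Lemma phi0 : (phi (0 : R) : R) = 0.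
Proof.
have h := phi_add 0 0; rewrite addr0 in h.
have e : ph (0:R) + ph (0:R) - ph (0:R) = 0 :> R by rewrite -h subrr.
by rewrite addrK in e.
Qed.

Lemma phi_exp (f : R) n : (phi (f ^+ n) : R) = (phi f : R) ^+ n.
Proof. by elim: n => [|n IH]; [exact: phi1 | rewrite !exprS phi_mul IH]. Qed.

Lemma phi_sum N (G : nat -> R) : (phi (\sum_(i < N) G i) : R) = \sum_(i < N) (phi (G i) : R).
Proof. by apply: (big_morph (fun f : R => (phi f : R)) phi_add phi0). Qed.

Lemma phi_ordr n (f : R) : ordr n f -> ordr n (phi f).
Proof.
case: n => [|n] h w hw; first by [].
have := phicont f (0:R) n _ w hw; rewrite phi0; apply => u hu.
by apply: h.
Qed.

Lemma phi_ssum (G : nat -> R) : ordfam G -> (phi (ssum G) : R) = ssum (fun n => (phi (G n) : R)).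
Proof.
move=> hG; apply: sfunext => w.
transitivity ((phi (\sum_(n < (deg w).+1) G n) : R) w).
  apply: (phicont _ _ (deg w)) => // u hu.
  by apply: (ssum_trunc G (deg w).+1 hG u).
by rewrite phi_sum eval_sum.
Qed.

End Phi.

Section Main.
Context {F : fieldType}.
Local Notation R := (ser F).
Local Notation sig := (sigma1 F : R).

Lemma Lam_hom (Lam : nat -> series F) : is_Lambda Lam ->
  forall n, homogeneous n (sscale ((-1) ^+ n) (Lam n) : R).
Proof.
case=> hL0 hLn; elim/ltn_ind => n IH.
case: n IH => [|n] IH.
  move=> w hw; rewrite /sscale hL0 expr0 mul1r.
  exact: (hom1 w hw).
have e : \sum_(i < n.+2) (Sgen F i : R) * (sscale ((-1) ^+ (n.+1 - i)) (Lam (n.+1 - i)%N) : R) = 0.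
  by apply: sfunext => w; rewrite eval_sum; apply: hLn.
rewrite big_ord_recl in e.
have e2 : (sscale ((-1) ^+ n.+1) (Lam n.+1) : R) =
   - \sum_(i < n.+1) (Sgen F (bump 0 i) : R) * (sscale ((-1) ^+ (n.+1 - bump 0 i)) (Lam (n.+1 - bump 0 i)%N) : R).
  apply/eqP; rewrite -addr_eq0; apply/eqP; rewrite -[RHS]e; congr (_ + _).
  exact: (esym (mul1r _)).
rewrite e2; apply: homN; apply: hom_sum => i.
have hi : (bump 0 i + (n.+1 - bump 0 i))%N = n.+1.
  by rewrite subnKC // /bump /= add1n ltnS -ltnS.
have hl : (n.+1 - bump 0 i < n.+1)%N by rewrite /bump /= add1n; lia.
have hh := hom_mul _ _ _ _ (homS (bump 0 i)) (IH (n.+1 - bump 0 i)%N hl).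
by rewrite hi in hh.
Qed.

End Main.

Section Main2.
Context {F : fieldType}.
Local Notation R := (ser F).
Local Notation sig := (sigma1 F : R).
Variables (K : nat -> series F) (g ginv : series F) (Lam : nat -> series F) (phi : series F -> series F).
Hypothesis hK : forall n, homogeneous n (K n).
Hypothesis hK0 : K 0%N = sone F.
Hypothesis hsig : sigma1 F = ssum (fun n => smul (K n) (spow (sigma1 F) n)).
Hypothesis hg : g = ssum (fun n => smul (Sgen F n) (spow g n)).
Hypothesis hgi1 : smul g ginv = sone F.
Hypothesis hgi2 : smul ginv g = sone F.
Hypothesis hLam : is_Lambda Lam.
Hypothesis phiD : forall f g, phi (sadd f g) = sadd (phi f) (phi g).
Hypothesis phiM : forall f g, phi (smul f g) = smul (phi f) (phi g).
Hypothesis phi1 : phi (sone F) = sone F.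
Hypothesis phicont : forall (f g : series F) (d : nat),
          (forall u, (deg u <= d)%N -> f u = g u) ->
          forall w, (deg w <= d)%N -> phi f w = phi g w.
Hypothesis phiS : forall n, (0 < n)%N -> phi (Sgen F n) = sscale ((-1) ^+ n) (Lam n).

Local Notation ph x := (phi x : R).
Let lam n := ph (Sgen F n).

Lemma lamE n : lam n = (sscale ((-1) ^+ n) (Lam n) : R).
Proof.
case: n => [|n]; last by rewrite /lam phiS.
rewrite /lam /= phi1 hLam.1; apply: sfunext => w; by rewrite /sscale expr0 mul1r.
Qed.

Lemma lamH n : homogeneous n (lam n).
Proof. by rewrite lamE; apply: Lam_hom. Qed.

Lemma lamO : ordfam lam.
Proof. by move=> n; apply: hom_ordr; apply: lamH. Qed.

Lemma SO : ordfam (fun n => (Sgen F n : R)).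
Proof. by move=> n; apply: hom_ordr; apply: homS. Qed.

Let L : R := ssum lam.

Lemma sL : sig * L = 1.
Proof.
have -> : sig * L = ssum (fun k => \sum_(i < k.+1) (Sgen F i : R) * lam (k - i)%N).
  rewrite -(fubini (fun i j => (Sgen F i : R) * lam j)); last first.
    by move=> i j; apply: ordr_mul; [apply: SO | apply: lamO].
  rewrite /L /sigma1 ssum_mulr; last exact: SO.
  by congr ssum; apply: boolp.funext => n; rewrite ssum_mull //; apply: lamO.
rewrite -[RHS](ssum_single 1 0); last exact: ordr0.
congr ssum; apply: boolp.funext => k.
case: k => [|k].
  have l0 : lam 0 = 1 by rewrite /lam /= phi1.
  by rewrite big_ord1 l0 mulr1.
apply: sfunext => w; rewrite eval_sum.
rewrite (eq_bigr (fun i : 'I_ _ => smul (Sgen F i) (sscale ((-1) ^+ (k.+1 - i)) (Lam (k.+1 - i)%N)) w)); last first.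
  by move=> i _; rewrite lamE.
exact: hLam.2.
Qed.

Lemma Ls : L * sig = 1.
Proof.
pose x : R := 1 - sig.
have xO : ordr 1 x.
  by apply/(agr_ordr 1 1 sig); apply: agr_sym; exact: sig_agr1.
have xnO : ordfam (fun n => x ^+ n).
  elim=> [|n IH]; first exact: ordr0.
  by rewrite exprS; exact: (ordr_mul _ _ _ _ xO IH).
pose M : R := ssum (fun n => x ^+ n).
have Ms : M * sig = 1.
  have -> : sig = 1 - x by rewrite /x opprB addrCA subrr addr0.
  rewrite mulrBr mulr1 /M ssum_mulr // [X in X - _](ssum_recl _ xnO) expr0.
  have -> : (fun n => x ^+ n * x) = (fun n => x ^+ n.+1).
    by apply: boolp.funext => n; rewrite exprSr.
  by rewrite addrK.
have LM : L = M by rewrite -[L]mul1r -Ms -mulrA sL mulr1.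
by rewrite LM.
Qed.

Lemma hcomm : L * sig = sig * L.
Proof. by rewrite Ls sL. Qed.

Lemma LnSn n : L ^+ n * sig ^+ n = 1.
Proof.
elim: n => [|n IH]; first by rewrite !expr0 mulr1.
by rewrite exprSr exprS -mulrA [L * _]mulrA Ls mul1r IH.
Qed.

Let G : R := ph g.
Let H : R := ph ginv.

Lemma gO : ordfam (fun n => (Sgen F n : R) * (g : R) ^+ n).
Proof.
by move=> n; have := ordr_mul _ _ _ _ (SO n) (ordr0 ((g : R) ^+ n)); rewrite addn0.
Qed.

Lemma eG : G = ssum (fun n => lam n * G ^+ n).
Proof.
have hg' : (g : R) = ssum (fun n => (Sgen F n : R) * (g : R) ^+ n).
  rewrite {1}hg; congr ssum; apply: boolp.funext => n; by rewrite spowE.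
rewrite /G {1}hg' phi_ssum //; last exact: gO.
congr ssum; apply: boolp.funext => n.
by rewrite phi_mul // phi_exp.
Qed.

Lemma HG : H * G = 1.
Proof. by rewrite /G /H -phi_mul //; change (ph (smul ginv g) = 1); rewrite hgi2 phi1. Qed.

Lemma evG : ev G = L.
Proof.
apply: ser_ext => d; elim: d => [|d IH]; first by [].
have c1 : forall n, agr d (ev (G ^+ n)) (L ^+ n).
  elim=> [|n IHn]; first by rewrite !expr0 ev1.
  rewrite exprSr TM.
  apply: (agr_trans _ _ (ssum (fun a => hcomp a (G ^+ n) * L * sig ^+ a))).
    apply: agr_ssum => a; apply: agr_mul => //; apply: agr_mul => //.
  have -> : ssum (fun a => hcomp a (G ^+ n) * L * sig ^+ a) = ev (G ^+ n) * L.
    rewrite /ev ssum_mulr; last exact: ordfam_ev.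
    congr ssum; apply: boolp.funext => a.
    by rewrite -!mulrA (commrX a hcomm).
  rewrite exprSr; apply: agr_mul => //.
rewrite {1}eG ev_ssum; last first.
  by move=> n; have := ordr_mul _ _ _ _ (lamO n) (ordr0 (G ^+ n)); rewrite addn0.
have -> : L = ssum (fun n => lam n * L ^+ n * sig ^+ n).
  by rewrite {1}/L; congr ssum; apply: boolp.funext => n; rewrite -mulrA LnSn mulr1.
apply: agr_ssum => n; rewrite (ev_hom _ _ _ (lamH n)).
case: n => [|n].
  by rewrite !expr0 ev1.
apply: (agr_le (n.+1 + d + 0)%N); first lia.
apply: agr_mulr; first exact: ordr0.
by apply: agr_mull; [apply: lamO | apply: c1].
Qed.

Lemma evH : ev H = sig.
Proof.
have e1 : ev H * L = 1.
  rewrite -evG -(TM' H G) ?HG ?ev1 // evG; exact: hcomm.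
by rewrite -[ev H]mulr1 -Ls mulrA e1 mul1r.
Qed.

Lemma compK n : hcomp n (ssum K) = K n.
Proof.
apply: sfunext => w; rewrite /hcomp ssumE; case: eqP => [e|ne].
  rewrite e big_ord_recr /= big1 ?add0r // => i _; apply: hK; rewrite e.
  by move: (ltn_ord i); lia.
by rewrite hK.
Qed.


Lemma ssumK : (ssum K : R) = H.
Proof.
apply: ev_inj; rewrite evH /ev.
have -> : (fun n => hcomp n (ssum K) * sig ^+ n) = (fun n => (K n : R) * sig ^+ n).
  by apply: boolp.funext => n; rewrite compK.
rewrite [RHS]hsig; congr ssum; apply: boolp.funext => n; by rewrite spowE.
Qed.

End Main2.

Theorem mainTheorem1 (F : fieldType)
    (K : nat -> series F) (g ginv : series F)
    (Lam : nat -> series F) (phi : series F -> series F) :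
  (* K_n homogeneous of degree n, K_0 = 1, sigma_1 = sum_n K_n sigma_1^n *)
  (forall n, homogeneous n (K n)) ->
  K 0%N = sone F ->
  sigma1 F = ssum (fun n => smul (K n) (spow (sigma1 F) n)) ->
  (* g = sum_n S_n g^n *)
  g = ssum (fun n => smul (Sgen F n) (spow g n)) ->
  (* ginv is the inverse of g *)
  smul g ginv = sone F -> smul ginv g = sone F ->
  (* the Lambda_n and f |-> f(-A) *)
  is_Lambda Lam -> is_minusA Lam phi ->
  sadd (sone F) (ssum (fun n => if n is 0%N then szero F else K n)) = phi ginv.
Proof.
move=> hK hK0 hsig hg hgi1 hgi2 hLam [phiD [_ [phiM [phi1 [_ [phicont phiS]]]]]].
rewrite -(ssumK K g ginv Lam phi hK hsig hg hgi2 hLam phiD phiM phi1 phicont phiS).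
apply: sfunext => w; rewrite /sadd !ssumE !big_ord_recl hK0 /=.
by rewrite /szero add0r.
Qed.
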